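(* Let $\mathcal X=\{x_{n,k}\}$ be a Marcinkiewicz–Zygmund family on $\mathbb T$ with weights $\tau_{n,k}$ and constants $A,B>0$, and let $w_{n,k}$ and $I_n$ be the associated quadrature weights and quadrature rules (as defined in the context). Then: (i) $I_n$ is exact on $\mathcal T_n$, i.e. $I_n(p)=\int_{-1/2}^{1/2}p(x)\,dx$ for all $p\in\mathcal T_n$. (ii) For $f\in H^\sigma(\mathbb T)$, $\sigma>1/2$, $$|I_n(f)|^2\le A^{-1}\sum_{k=1}^{L_n}|f(x_{n,k})|^2\tau_{n,k}\le \frac BA\|f\|_\infty^2.$$
   Context: $\mathbb T=\mathbb R/\mathbb Z\cong(-1/2,1/2]$ with Lebesgue measure; $\langle f,g\rangle=\int_{-1/2}^{1/2}f\bar g\,dx$. $\mathcal T_n$ = trigonometric polynomials $\sum_{|k|\le n}c_ke^{2\pi ikx}$. $H^\sigma(\mathbb T)$ = functions with $\sum_{k\in\mathbb Z}|\hat f(k)|^2(1+k^2)^\sigma<\infty$, $\hat f(k)=\int_0^1f(x)e^{-2\pi ikx}dx$ (for $\sigma>1/2$ these are continuous). A Marcinkiewicz–Zygmund family is a set $\{x_{n,k}: n\in\mathbb N,k=1,\dots,L_n\}\subseteq\mathbb T$ with weights $\tau_{n,k}>0$ and constants $A,B>0$ independent of $n$ such that $A\|p\|_2^2\le\sum_{k=1}^{L_n}|p(x_{n,k})|^2\tau_{n,k}\le B\|p\|_2^2$ for all $p\in\mathcal T_n$. Let $k^{(n)}_x\in\mathcal T_n$ be the reproducing kernel of $\mathcal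 T_n$, $p(x)=\langle p,k^{(n)}_x\rangle$ for $p\in\mathcal T_n$ (the Dirichlet kernel $k^{(n)}_x(y)=\sin((2n+1)\pi(y-x))/\sin(\pi(y-x))$). Let $S_np=\sum_{k=1}^{L_n}\tau_{n,k}\langle p,k^{(n)}_{x_{n,k}}\rangle k^{(n)}_{x_{n,k}}$ (the frame operator, invertible on $\mathcal T_n$), $e_{n,k}=S_n^{-1}(\tau_{n,k}^{1/2}k^{(n)}_{x_{n,k}})$, $w_{n,k}=\tau_{n,k}^{1/2}\int_{-1/2}^{1/2}e_{n,k}(x)\,dx$, and $I_n(f)=\sum_{k=1}^{L_n}f(x_{n,k})w_{n,k}$. *)

(* Defs.v *)
From HB Require Import structures.
From mathcomp Require Import all_boot all_order all_algebra.
From mathcomp Require Import all_classical all_reals all_analysis.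
From mathcomp Require Import complex.
Set Implicit Arguments. Unset Strict Implicit. Unset Printing Implicit Defensive.
Import Order.TTheory GRing.Theory Num.Theory numFieldNormedType.Exports.
Local Open Scope classical_set_scope.
Local Open Scope ring_scope.
Local Open Scope complex_scope.

Definition cexp2pi (R : realType) (t : R) : R[i] :=
  (cos (2 * pi * t)) +i* (sin (2 * pi * t)).

Definition cint (R : realType) (a b : R) (g : R -> R[i]) : R[i] :=
  (Rintegral (@lebesgue_measure R) `[a, b] (fun x => complex.Re (g x))) +i*
  (Rintegral (@lebesgue_measure R) `[a, b] (fun x => complex.Im (g x))).

Definition freq (n : nat) (j : 'I_(n.*2.+1)) : int := (j%:Z - n%:Z)%R.

(* T_n : trigonometric polynomials of degree <= n, as 1-periodic functions on R *)
Definition trig_poly (R : realType) (n : nat) (p : R -> R[i]) : Prop :=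
  exists c : 'I_(n.*2.+1) -> R[i],
    forall x : R, p x = \sum_(j < n.*2.+1) c j * cexp2pi ((freq j)%:~R * x).

Definition ip (R : realType) (f g : R -> R[i]) : R[i] :=
  cint (- (1/2)) (1/2) (fun y => f y * (g y)^*).

Definition norm2sq (R : realType) (f : R -> R[i]) : R :=
  Rintegral (@lebesgue_measure R) `[- (1/2), 1/2] (fun y => Normc.normc (f y) ^+ 2).

Definition supnorm (R : realType) (f : R -> R[i]) : R :=
  sup (range (fun x => Normc.normc (f x))).

(* reproducing kernel of T_n (Dirichlet kernel): k_x(y) = sum_{|j|<=n} e(j(y-x)) *)
Definition kern (R : realType) (n : nat) (x : R) : R -> R[i] :=
  fun y => \sum_(j < n.*2.+1) cexp2pi ((freq j)%:~R * (y - x)).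

Definition MZ_family (R : realType) (L : nat -> nat)
    (X : forall n, 'I_(L n) -> R) (tau : forall n, 'I_(L n) -> R) (A B : R) : Prop :=
  [/\ 0 < A, 0 < B, (forall n k, 0 < tau n k) &
      forall n p, trig_poly n p ->
        A * norm2sq p <= \sum_(k < L n) Normc.normc (p (X n k)) ^+ 2 * tau n k
        /\ \sum_(k < L n) Normc.normc (p (X n k)) ^+ 2 * tau n k <= B * norm2sq p].

Definition frameS (R : realType) (L : nat -> nat)
    (X : forall n, 'I_(L n) -> R) (tau : forall n, 'I_(L n) -> R) (n : nat)
    (p : R -> R[i]) : R -> R[i] :=
  fun y => \sum_(k < L n)
     (tau n k)%:C * ip p (kern n (X n k)) * kern n (X n k) y.

(* S_n^{-1} on T_n: the element p of T_n with S_n p = g (unique when S_n is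
   invertible on T_n, which holds for MZ families); 0 if there is none. *)
Definition frameSinv (R : realType) (L : nat -> nat)
    (X : forall n, 'I_(L n) -> R) (tau : forall n, 'I_(L n) -> R) (n : nat)
    (g : R -> R[i]) : R -> R[i] :=
  match pselect (exists p, trig_poly n p /\ frameS X tau n p = g) with
  | left h => proj1_sig (cid h)
  | right _ => fun _ => 0
  end.

Definition dualframe (R : realType) (L : nat -> nat)
    (X : forall n, 'I_(L n) -> R) (tau : forall n, 'I_(L n) -> R) (n : nat)
    (k : 'I_(L n)) : R -> R[i] :=
  frameSinv X tau n (fun y => (Num.sqrt (tau n k))%:C * kern n (X n k) y).

Definition qweight (R : realType) (L : nat -> nat)
    (X : forall n, 'I_(L n) -> R) (tau : forall n, 'I_(L n) -> R) (n : nat)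
    (k : 'I_(L n)) : R[i] :=
  (Num.sqrt (tau n k))%:C * cint (- (1/2)) (1/2) (dualframe X tau k).

Definition quad (R : realType) (L : nat -> nat)
    (X : forall n, 'I_(L n) -> R) (tau : forall n, 'I_(L n) -> R) (n : nat)
    (f : R -> R[i]) : R[i] :=
  \sum_(k < L n) f (X n k) * qweight X tau k.

Definition fourier_coef (R : realType) (f : R -> R[i]) (k : int) : R[i] :=
  cint 0 1 (fun x => f x * cexp2pi (- (k%:~R) * x)).

(* H^sigma(T), sigma > 1/2: (continuous representatives of) 1-periodic functions
   with sum_k |hat f(k)|^2 (1+k^2)^sigma < oo *)
Definition sobolev (R : realType) (s : R) (f : R -> R[i]) : Prop :=
  [/\ (forall x, f (x + 1) = f x),
      continuous (fun x : R => complex.Re (f x)),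
      continuous (fun x : R => complex.Im (f x)) &
      (\esum_(k in [set: int])
         ((Normc.normc (fourier_coef f k) ^+ 2 * (1 + (k%:~R : R) ^+ 2) `^ s)%:E)
        < +oo)%E].

(* Main.v *)
Require Import Defs.
From HB Require Import structures.
From mathcomp Require Import all_boot all_order all_algebra.
From mathcomp Require Import all_classical all_reals all_analysis.
From mathcomp Require Import complex.
From mathcomp Require Import ring.
Import Order.TTheory GRing.Theory Num.Theory numFieldNormedType.Exports.
Local Open Scope classical_set_scope.
Local Open Scope ring_scope.
Local Open Scope complex_scope.
Set Implicit Arguments. Unset Strict Implicit. Unset Printing Implicit Defensive.

Section Integrals.
Variable R : realType.
Local Notation mu := (@lebesgue_measure R).

Definition Ri (g : R -> R) := Rintegral mu `[- (1/2), 1/2] g.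

Lemma ab_lt : - (1/2) < (1/2 : R).
Proof. rewrite -subr_gt0 opprK -mulr2n. by rewrite mulrn_wgt0 // divr_gt0. Qed.

Lemma cont_int (g : R -> R) : continuous g -> mu.-integrable `[-(1/2), 1/2] (EFin \o g).
Proof. move=> cg; apply: continuous_compact_integrable; first exact: segment_compact.
  exact: continuous_subspaceT. Qed.

Lemma cont_sum (I : Type) (r : seq I) (g : I -> R -> R) :
  (forall i, continuous (g i)) -> continuous (fun x => \sum_(i <- r) g i x).
Proof.
move=> cg; elim: r => [|i r IH].
  have -> : (fun x : R => \sum_(i <- [::]) g i x) = cst 0.
    by apply: funext => x; rewrite big_nil.
  exact: cst_continuous.
have -> : (fun x : R => \sum_(j <- i :: r) g j x) = g i + (fun x => \sum_(j <- r) g j x).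
  by apply: funext => x; rewrite big_cons.
by move=> x; apply: continuousD; [exact: cg|exact: IH].
Qed.

Lemma Ri_sum (I : Type) (r : seq I) (g : I -> R -> R) :
  (forall i, continuous (g i)) -> Ri (fun x => \sum_(i <- r) g i x) = \sum_(i <- r) Ri (g i).
Proof.
move=> cg; elim: r => [|i r IH].
  have -> : (fun x : R => \sum_(i <- [::]) g i x) = (fun=> 0).
    by apply: funext => x; rewrite big_nil.
  by rewrite big_nil /Ri Rintegral_cst //= mul0r.
have -> : (fun x : R => \sum_(j <- i :: r) g j x) = (fun x => g i x + \sum_(j <- r) g j x).
  by apply: funext => x; rewrite big_cons.
rewrite big_cons -IH /Ri RintegralD //. all: try by apply: cont_int.
exact (cont_int (@cont_sum _ r g cg)).
Qed.

Lemma Ri_scale (c : R) (g : R -> R) : continuous g -> Ri (fun x => c * g x) = c * Ri g.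
Proof. by move=> cg; rewrite /Ri RintegralZl //; exact: cont_int. Qed.

Lemma Ri_FTC (f F : R -> R) : continuous f -> (forall x : R, is_derive x (1:R) F (f x)) ->
  Ri f = F (1/2) - F (-(1/2)).
Proof.
move=> cf dF.
have cF : continuous F.
  move=> x; apply: differentiable_continuous; apply/derivable1_diffP.
  exact: ex_derive.
have := @continuous_FTC2 R f F (-(1/2)) (1/2) ab_lt (continuous_subspaceT cf).
rewrite /Ri /Rintegral => ->.
- by rewrite -EFinB.
- split.
  + by move=> x _; exact: ex_derive.
  + exact/cvg_at_right_filter/cF.
  + exact/cvg_at_left_filter/cF.
- by move=> x _; rewrite derive1E derive_val.
Qed.


Lemma is_derive_lin (c x : R) : is_derive x (1:R) (fun y : R => c * y) c.
Proof.
have := @is_deriveZ R R R id c x 1 1 (is_derive_id x 1).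
by rewrite /GRing.scale /= mulr1.
Qed.

Lemma is_derive_sinc (c x : R) : is_derive x (1:R) (fun y : R => sin (c * y)) (cos (c * x) * c).
Proof.
have := @is_derive1_comp R sin (fun y => c * y) x (cos (c * x)) c _ (is_derive_lin c x).
by apply; exact: is_derive_sin.
Qed.

Lemma is_derive_cosc (c x : R) : is_derive x (1:R) (fun y : R => cos (c * y)) (- sin (c * x) * c).
Proof.
have := @is_derive1_comp R cos (fun y => c * y) x (- sin (c * x)) c _ (is_derive_lin c x).
by apply; exact: is_derive_cos.
Qed.

Lemma Ri_one : Ri (fun=> 1) = 1.
Proof.
rewrite (@Ri_FTC (fun=> 1) id); last by move=> x; exact: cvg_cst.
by rewrite opprK -splitr.
Qed.


Lemma derive_cont (F : R -> R) (f : R -> R) : (forall x : R, is_derive x (1:R) F (f x)) -> continuous F.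
Proof.
move=> dF x; apply: differentiable_continuous; apply/derivable1_diffP; exact: ex_derive.
Qed.

Lemma cont_cosc (c : R) : continuous (fun y => cos (c * y)).
Proof. exact: (derive_cont (fun x => is_derive_cosc c x)). Qed.

Lemma cont_sinc (c : R) : continuous (fun y => sin (c * y)).
Proof. exact: (derive_cont (fun x => is_derive_sinc c x)). Qed.

Lemma sin_pi_int (m : int) : sin (pi * m%:~R) = 0 :> R.
Proof.
have sn : forall n : nat, sin (pi * n%:R) = 0 :> R.
  elim=> [|n IH]; first by rewrite mulr0 sin0.
  by rewrite -natr1 mulrDr mulr1 sinDpi IH oppr0.
case: m => n; first exact: sn.
by rewrite NegzE rmorphN /= mulrN sinN sn oppr0.
Qed.

Lemma Ri_cos (m : int) : Ri (fun y => cos (2 * pi * (m%:~R * y))) = (m == 0)%:R.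
Proof.
have [->|m0] := eqVneq m 0.
  rewrite ?eqxx -Ri_one; congr Ri; apply: funext => y.
  by rewrite mul0r mulr0 cos0.
set c : R := 2 * pi * m%:~R.
have c0 : c != 0.
  apply: mulf_neq0; last by rewrite intr_eq0.
  by apply: mulf_neq0; [rewrite pnatr_eq0|rewrite gt_eqF // pi_gt0].
have -> : (fun y => cos (2 * pi * (m%:~R * y))) = (fun y => cos (c * y)).
  by apply: funext => y; rewrite /c mulrA.
have dF : forall x : R, is_derive x (1:R) (fun y => c^-1 * sin (c * y)) (cos (c * x)).
  move=> x; have H := @is_deriveZ R R R (fun y => sin (c * y)) c^-1 x 1 _ (is_derive_sinc c x).
  apply: (is_derive_eq H).
  by rewrite /GRing.scale /= mulrCA mulVf // mulr1.
rewrite (Ri_FTC (@cont_cosc c) dF).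
have h : c * (1/2) = pi * m%:~R.
  by rewrite /c mulrAC; congr (_ * _); rewrite mulrAC div1r mulfV ?pnatr_eq0 // mul1r.
by rewrite mulrN h sinN sin_pi_int oppr0 mulr0 subrr.
Qed.

Lemma Ri_sin (m : int) : Ri (fun y => sin (2 * pi * (m%:~R * y))) = 0.
Proof.
have [->|m0] := eqVneq m 0.
  have -> : (fun y : R => sin (2 * pi * ((0:int)%:~R * y))) = (fun=> 0 * 1).
    by apply: funext => y; rewrite mul0r mulr0 sin0 mul0r.
  by rewrite Ri_scale ?mul0r //; move=> x; exact: cvg_cst.
set c : R := 2 * pi * m%:~R.
have c0 : c != 0.
  apply: mulf_neq0; last by rewrite intr_eq0.
  by apply: mulf_neq0; [rewrite pnatr_eq0|rewrite gt_eqF // pi_gt0].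
have -> : (fun y => sin (2 * pi * (m%:~R * y))) = (fun y => sin (c * y)).
  by apply: funext => y; rewrite /c mulrA.
have dF : forall x : R, is_derive x (1:R) (fun y => - c^-1 * cos (c * y)) (sin (c * x)).
  move=> x; have H := @is_deriveZ R R R (fun y => cos (c * y)) (- c^-1) x 1 _ (is_derive_cosc c x).
  apply: (is_derive_eq H).
  by rewrite /GRing.scale /= mulNr mulNr mulrN opprK mulrCA mulVf // mulr1.
rewrite (Ri_FTC (@cont_sinc c) dF).
by rewrite mulrN cosN subrr.
Qed.

End Integrals.

Section Cplx.
Variable R : realType.

Lemma Re_add (x y : R[i]) : complex.Re (x + y) = complex.Re x + complex.Re y.
Proof. by case: x => a b; case: y => c d. Qed.
Lemma Im_add (x y : R[i]) : complex.Im (x + y) = complex.Im x + complex.Im y.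
Proof. by case: x => a b; case: y => c d. Qed.
Lemma Re_sum (I : Type) (r : seq I) (P : pred I) (F : I -> R[i]) :
  complex.Re (\sum_(i <- r | P i) F i) = \sum_(i <- r | P i) complex.Re (F i).
Proof. exact: (big_morph _ Re_add). Qed.
Lemma Im_sum (I : Type) (r : seq I) (P : pred I) (F : I -> R[i]) :
  complex.Im (\sum_(i <- r | P i) F i) = \sum_(i <- r | P i) complex.Im (F i).
Proof. exact: (big_morph _ Im_add). Qed.
Lemma Re_mul (x y : R[i]) : complex.Re (x * y) = complex.Re x * complex.Re y - complex.Im x * complex.Im y.
Proof. by case: x => a b; case: y => c d. Qed.
Lemma Im_mul (x y : R[i]) : complex.Im (x * y) = complex.Re x * complex.Im y + complex.Im x * complex.Re y.
Proof. by case: x => a b; case: y => c d. Qed.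
Lemma complex_eta (z : R[i]) : z = (complex.Re z) +i* (complex.Im z).
Proof. by case: z. Qed.

Lemma Re_ce (t : R) : complex.Re (cexp2pi t) = cos (2 * pi * t). Proof. by []. Qed.
Lemma Im_ce (t : R) : complex.Im (cexp2pi t) = sin (2 * pi * t). Proof. by []. Qed.

Lemma cont_cos2 (m : int) : continuous (fun y : R => cos (2 * pi * (m%:~R * y))).
Proof.
have -> : (fun y : R => cos (2 * pi * (m%:~R * y))) = (fun y => cos ((2 * pi * m%:~R) * y)).
  by apply: funext => y; rewrite mulrA.
exact: cont_cosc.
Qed.
Lemma cont_sin2 (m : int) : continuous (fun y : R => sin (2 * pi * (m%:~R * y))).
Proof.
have -> : (fun y : R => sin (2 * pi * (m%:~R * y))) = (fun y => sin ((2 * pi * m%:~R) * y)).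
  by apply: funext => y; rewrite mulrA.
exact: cont_sinc.
Qed.
Lemma RiE (f : R -> R) : Rintegral (@lebesgue_measure R) `[- (1/2), 1/2] f = Ri f.
Proof. by []. Qed.
Lemma cont_scal (p : R) (f : R -> R) : continuous f -> continuous (fun x => p * f x).
Proof. move=> cf x. apply: continuousM. exact: cst_continuous. exact: cf. Qed.
Lemma Ri_lin2 (p q : R) (f g : R -> R) : continuous f -> continuous g ->
  Ri (fun x => p * f x + q * g x) = p * Ri f + q * Ri g.
Proof.
move=> cf cg; rewrite /Ri RintegralD //; last first.
  exact: (cont_int (@cont_scal q g cg)).
  exact: (cont_int (@cont_scal p f cf)).
by rewrite !RintegralZl //; apply: cont_int.
Qed.
Lemma cont_lin2 (p q : R) (f g : R -> R) : continuous f -> continuous g ->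
  continuous (fun x => p * f x + q * g x).
Proof.
move=> cf cg.
have -> : (fun x => p * f x + q * g x) = (fun x => p * f x) + (fun x => q * g x) by [].
move=> x; apply: continuousD; [exact: (@cont_scal p f cf)|exact: (@cont_scal q g cg)].
Qed.

Lemma cint_trig (I : finType) (a : I -> R[i]) (m : I -> int) :
  cint (- (1/2)) (1/2) (fun y => \sum_i a i * cexp2pi ((m i)%:~R * y))
  = \sum_i a i * ((m i == 0)%:R).
Proof.
rewrite /cint [RHS]complex_eta Re_sum Im_sum.
have -> : (fun x => complex.Re (\sum_i a i * cexp2pi ((m i)%:~R * x))) =
  (fun x => \sum_(i <- index_enum I) (complex.Re (a i) * cos (2 * pi * ((m i)%:~R * x)) +
                     (- complex.Im (a i)) * sin (2 * pi * ((m i)%:~R * x)))).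
  apply: funext => x; rewrite Re_sum; apply: eq_bigr => i _.
  by rewrite Re_mul Re_ce Im_ce mulNr.
have -> : (fun x => complex.Im (\sum_i a i * cexp2pi ((m i)%:~R * x))) =
  (fun x => \sum_(i <- index_enum I) (complex.Im (a i) * cos (2 * pi * ((m i)%:~R * x)) +
                     complex.Re (a i) * sin (2 * pi * ((m i)%:~R * x)))).
  apply: funext => x; rewrite Im_sum; apply: eq_bigr => i _.
  by rewrite Im_mul Re_ce Im_ce addrC.
congr (_ +i* _); rewrite RiE Ri_sum; try (by move=> i; apply: cont_lin2; [exact: cont_cos2|exact: cont_sin2]);
  apply: eq_bigr => i _; rewrite Ri_lin2 ?Ri_cos ?Ri_sin; try exact: cont_cos2;
  try exact: cont_sin2; case: (m i == 0); rewrite /= ?mulr1 ?mulr0 ?addr0 //.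
Qed.


Lemma conjE (z : R[i]) : Num.conj z = conjc z.
Proof. by []. Qed.

Lemma complexP (z w : R[i]) : complex.Re z = complex.Re w -> complex.Im z = complex.Im w -> z = w.
Proof. by case: z => a b; case: w => c d /= -> ->. Qed.

Lemma ce_add (s t : R) : cexp2pi (s + t) = cexp2pi s * cexp2pi t.
Proof.
apply: complexP; rewrite ?Re_mul ?Im_mul /= mulrDr ?cosD ?sinD; ring.
Qed.

Lemma ce_conj (t : R) : (Num.conj (cexp2pi t)) = cexp2pi (- t).
Proof. by rewrite conjE /cexp2pi mulrN cosN sinN. Qed.

Lemma ce_0 : cexp2pi 0 = 1 :> R[i].
Proof. by rewrite /cexp2pi mulr0 cos0 sin0. Qed.

Lemma normc_sq (z : R[i]) : Normc.normc z ^+ 2 = complex.Re (z * (Num.conj z)).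
Proof.
case: z => a b; rewrite conjE /= sqr_sqrtr ?addr_ge0 ?sqr_ge0 //; ring.
Qed.

End Cplx.

Section Trig.
Variable R : realType.
Variable n : nat.
Local Notation N := n.*2.+1.

Definition E (j : 'I_N) (y : R) : R[i] := cexp2pi ((freq j)%:~R * y).
Definition tp (c : 'I_N -> R[i]) (y : R) : R[i] := \sum_j c j * E j y.

Lemma E_mul_conj j l y : E j y * (Num.conj (E l y)) = cexp2pi ((freq j - freq l)%:~R * y).
Proof. by rewrite /E ce_conj -ce_add intrB mulrBl. Qed.

Lemma freq_inj (j l : 'I_N) : freq j = freq l -> j = l.
Proof.
move=> h; apply: val_inj; apply/eqP; rewrite -eqz_nat; apply/eqP.
by have := congr1 (fun z => z + n%:Z) h; rewrite /freq !subrK.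
Qed.

Lemma mid_lt : (n < N)%N.
Proof. by rewrite ltnS -addnn leq_addr. Qed.
Definition mid : 'I_N := Ordinal mid_lt.

Lemma freq_eq0 (j : 'I_N) : (freq j == 0) = (j == mid).
Proof.
apply/eqP/eqP => [h|->]; last by rewrite /freq /= subrr.
apply: freq_inj; rewrite h /freq /= subrr //.
Qed.

Lemma ip_tp c d : ip (tp c) (tp d) = \sum_j c j * (Num.conj (d j)).
Proof.
rewrite /ip.
have -> : (fun y => tp c y * (Num.conj (tp d y))) = (fun y => \sum_(p : 'I_N * 'I_N)
   (c p.1 * (Num.conj (d p.2))) * cexp2pi ((freq p.1 - freq p.2)%:~R * y)).
  apply: funext => y; rewrite /tp rmorph_sum big_distrlr /=.
  rewrite -(pair_bigA _ (fun j l => c j * Num.conj (d l) * cexp2pi ((freq j - freq l)%:~R * y))) /=.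
  apply: eq_bigr => j _; apply: eq_bigr => l _.
  rewrite rmorphM /= -E_mul_conj; ring.
rewrite cint_trig -(pair_bigA _ (fun j l => c j * Num.conj (d l) * (freq j - freq l == 0)%:R)) /=; apply: eq_bigr => j _.
rewrite (bigD1 j) //= subrr eqxx mulr1 big1 ?addr0 // => l lj.
rewrite subr_eq0; case: eqP => [/freq_inj h|_]; first by rewrite h eqxx in lj.
by rewrite mulr0.
Qed.

Lemma cint_tp c : cint (- (1/2)) (1/2) (tp c) = c mid.
Proof.
rewrite /tp /E cint_trig (bigD1 mid) //= freq_eq0 eqxx mulr1 big1 ?addr0 // => j jm.
by rewrite freq_eq0 (negbTE jm) mulr0.
Qed.

Lemma kern_tp x : kern n x = tp (fun j => (Num.conj (E j x))).
Proof.
apply: funext => y; rewrite /kern /tp; apply: eq_bigr => j _.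
rewrite /E ce_conj -ce_add; congr cexp2pi; ring.
Qed.

Lemma norm2sq_tp c : norm2sq (tp c) = \sum_j Normc.normc (c j) ^+ 2.
Proof.
have -> : norm2sq (tp c) = complex.Re (ip (tp c) (tp c)).
  rewrite /norm2sq /ip /cint /=; congr Rintegral; apply: funext => y.
  exact: normc_sq.
by rewrite ip_tp Re_sum; apply: eq_bigr => j _; rewrite normc_sq.
Qed.


Lemma tpE c y : tp c y = \sum_j c j * E j y.
Proof. by []. Qed.

Lemma tp_trig c : trig_poly n (tp c).
Proof. by exists c. Qed.

Lemma tp_inj a b : tp a = tp b -> a = b.
Proof.
move=> h; apply: funext => j.
have := congr1 (fun p => ip p (tp (fun i => (i == j)%:R))) h; rewrite !ip_tp.
rewrite (bigD1 j) //= (bigD1 j (P := predT)) //= eqxx rmorph1 !mulr1.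
rewrite !big1 ?addr0 // => i ij; by rewrite (negbTE ij) rmorph0 mulr0.
Qed.

Lemma trig_tp p : trig_poly n p -> exists c, p = tp c.
Proof. by case=> c hc; exists c; apply: funext => y; rewrite hc. Qed.

End Trig.

Section Frame.
Variables (R : realType) (L : nat -> nat) (X : forall n, 'I_(L n) -> R)
  (tau : forall n, 'I_(L n) -> R) (n : nat).
Local Notation N := n.*2.+1.
Local Notation xk k := (@X n k).
Local Notation tk k := (@tau n k).

Definition Sc (c : 'I_N -> R[i]) (j : 'I_N) : R[i] :=
  \sum_(k < L n) (tk k)%:C * tp c (xk k) * Num.conj (E j (xk k)).

Definition Bf (c d : 'I_N -> R[i]) : R[i] :=
  \sum_(k < L n) (tk k)%:C * tp c (xk k) * Num.conj (tp d (xk k)).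

Lemma ip_kern (c : 'I_N -> R[i]) (x : R) : ip (tp c) (kern n x) = tp c x.
Proof. rewrite kern_tp ip_tp tpE; apply: eq_bigr => j _; by rewrite conjCK. Qed.

Lemma frameS_tp (c : 'I_N -> R[i]) : frameS X tau n (tp c) = tp (Sc c).
Proof.
apply: funext => y; rewrite /frameS [RHS]tpE /Sc.
under eq_bigr => k _ do rewrite ip_kern kern_tp (tpE (fun j => Num.conj (E j (xk k)))) big_distrr.
rewrite exchange_big /=; apply: eq_bigr => j _; rewrite big_distrl /=.
apply: eq_bigr => k _; ring.
Qed.

Lemma SB (c d : 'I_N -> R[i]) : \sum_j Sc c j * Num.conj (d j) = Bf c d.
Proof.
rewrite /Sc /Bf; under eq_bigr do rewrite big_distrl.
rewrite exchange_big; apply: eq_bigr => k _ /=.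
rewrite [in RHS](tpE d) rmorph_sum [in RHS]big_distrr. apply: eq_bigr => j _ /=; rewrite rmorphM /=; ring.
Qed.

Lemma conjC_realC (t : R) : Num.conj (t%:C) = t%:C.
Proof. by rewrite conjE conjc_real. Qed.

Lemma Bf_conj (c d : 'I_N -> R[i]) : Num.conj (Bf c d) = Bf d c.
Proof.
rewrite /Bf rmorph_sum; apply: eq_bigr => k _; rewrite !rmorphM /= conjCK conjC_realC; ring.
Qed.

Lemma normc_sqC (z : R[i]) : ((Normc.normc z) ^+ 2)%:C = z * Num.conj z.
Proof.
apply: complexP; first by rewrite normc_sq.
by case: z => a b; rewrite conjE /=; ring.
Qed.

Lemma Bf_diag (c : 'I_N -> R[i]) : Bf c c = (\sum_k Normc.normc (tp c (xk k)) ^+ 2 * tk k)%:C.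
Proof.
rewrite /Bf rmorph_sum; apply: eq_bigr => k _; rewrite rmorphM /= normc_sqC; ring.
Qed.

Lemma herm (c d : 'I_N -> R[i]) : \sum_j c j * Num.conj (Sc d j) = \sum_j Sc c j * Num.conj (d j).
Proof.
rewrite SB -Bf_conj -SB rmorph_sum; apply: eq_bigr => j _.
by rewrite rmorphM /= conjCK mulrC.
Qed.

Definition Mx : 'M[R[i]]_N :=
  \matrix_(l, j) \sum_(k < L n) (tk k)%:C * E l (xk k) * Num.conj (E j (xk k)).

Lemma Mx_Sc (c : 'I_N -> R[i]) : \row_j c j *m Mx = \row_j Sc c j.
Proof.
apply/rowP => j; rewrite !mxE /Sc.
under eq_bigr do rewrite !mxE big_distrr.
rewrite exchange_big /=; apply: eq_bigr => k _.
rewrite tpE big_distrr big_distrl /=; apply: eq_bigr => l _; ring.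
Qed.


Lemma Sc_inj_aux (A B : R) (hMZ : MZ_family X tau A B) (c : 'I_N -> R[i]) :
  (forall j, Sc c j = 0) -> forall j, c j = 0.
Proof.
move=> h.
have hB : Bf c c = 0 by rewrite -SB big1 // => j _; rewrite h mul0r.
rewrite Bf_diag in hB.
have hs : \sum_k Normc.normc (tp c (xk k)) ^+ 2 * tk k = 0 by have := congr1 (@complex.Re R) hB.
case: hMZ => A0 _ _ H.
have [hA _] := H n (tp c) (tp_trig c).
rewrite hs norm2sq_tp pmulr_rle0 // in hA.
have hs0 : \sum_j Normc.normc (c j) ^+ 2 = 0.
  by apply/le_anti; rewrite hA sumr_ge0 // => j _; exact: sqr_ge0.
move=> j; have := @psumr_eq0P _ _ predT (fun i => Normc.normc (c i) ^+ 2) (fun i _ => sqr_ge0 _) hs0 j isT.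
by move/eqP; rewrite sqrf_eq0 => /eqP /Normc.eq0_normc.
Qed.

Lemma Sc_surj (A B : R) (hMZ : MZ_family X tau A B) (d : 'I_N -> R[i]) :
  exists c, Sc c = d.
Proof.
have inj : forall v : 'rV_N, v *m Mx = 0 -> v = 0.
  move=> v hv.
  have hv' : v = \row_j v 0 j by apply/rowP => j; rewrite mxE.
  rewrite hv' Mx_Sc in hv.
  apply/rowP => j; rewrite mxE.
  apply: (Sc_inj_aux hMZ (c := fun j => v 0 j)) => i.
  by have := congr1 (fun M : 'rV[R[i]]_N => M 0 i) hv; rewrite !mxE.
have uM : Mx \in unitmx by rewrite -row_free_unit; exact: inj_row_free.
exists (fun j => ((\row_j d j) *m invmx Mx) 0 j).
apply: funext => j.
have := Mx_Sc (fun j => ((\row_j d j) *m invmx Mx) 0 j).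
have -> : \row_j ((\row_j0 d j0) *m invmx Mx) 0 j = (\row_j d j) *m invmx Mx.
  by apply/rowP => i; rewrite mxE.
rewrite mulmxKV // => /(congr1 (fun M : 'rV[R[i]]_N => M 0 j)); rewrite !mxE => <-.
by [].
Qed.

Lemma frameSinv_tp (A B : R) (hMZ : MZ_family X tau A B) (d : 'I_N -> R[i]) :
  exists c, frameSinv X tau n (tp d) = tp c /\ Sc c = d.
Proof.
rewrite /frameSinv; case: pselect => [h|nh]; last first.
  exfalso; apply: nh; have [c hc] := Sc_surj hMZ d.
  by exists (tp c); split; [exact: tp_trig|rewrite frameS_tp hc].
case: (cid h) => p [htp hS] /=; have [c hc] := trig_tp htp; rewrite hc in hS *.
exists c; split => //; apply: tp_inj; by rewrite -frameS_tp.
Qed.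

End Frame.

Section Aux.
Variable R : realType.

Lemma normc_ge0 (z : R[i]) : 0 <= Normc.normc z.
Proof. by case: z => a b /=; exact: sqrtr_ge0. Qed.

Lemma normc_conj (z : R[i]) : Normc.normc (Num.conj z) = Normc.normc z.
Proof. by case: z => a b; rewrite conjE /= sqrrN. Qed.

Lemma normc_real (x : R) : Normc.normc x%:C = `|x|.
Proof. by rewrite /= expr0n /= addr0 sqrtr_sqr. Qed.

Lemma normc_sum (I : Type) (r : seq I) (F : I -> R[i]) :
  Normc.normc (\sum_(i <- r) F i) <= \sum_(i <- r) Normc.normc (F i).
Proof.
elim: r => [|i r IH]; first by rewrite !big_nil Normc.normc0.
rewrite !big_cons; apply: le_trans (le_normcD _ _) _; exact: lerD.
Qed.

Lemma CS (I : finType) (a b : I -> R) :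
  (\sum_i a i * b i) ^+ 2 <= (\sum_i a i ^+ 2) * (\sum_i b i ^+ 2).
Proof.
set Sa := \sum_i a i ^+ 2; set Sb := \sum_i b i ^+ 2; set Sab := \sum_i a i * b i.
have Sb0 : 0 <= Sb by apply: sumr_ge0 => i _; exact: sqr_ge0.
have [Sbz|Sbp] := eqVneq Sb 0.
  have bz : forall i, b i = 0.
    move=> i; have := @psumr_eq0P _ _ predT (fun i => b i ^+ 2) (fun i _ => sqr_ge0 _) Sbz i isT.
    by move/eqP; rewrite sqrf_eq0 => /eqP.
  have -> : Sab = 0 by rewrite /Sab big1 // => i _; rewrite bz mulr0.
  by rewrite Sbz expr0n /= mulr0.
have Sbg : 0 < Sb by rewrite lt0r Sbp Sb0.
have e : \sum_i (a i * Sb - b i * Sab) ^+ 2 = Sb * (Sa * Sb - Sab ^+ 2).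
  transitivity (\sum_i (a i ^+ 2 * Sb ^+ 2 - (a i * b i) * (2 * Sb * Sab) + b i ^+ 2 * Sab ^+ 2)).
    by apply: eq_bigr => i _; ring.
  rewrite big_split sumrB /= -!mulr_suml -/Sa -/Sb -/Sab; ring.
have : 0 <= Sb * (Sa * Sb - Sab ^+ 2) by rewrite -e sumr_ge0 // => i _; exact: sqr_ge0.
by rewrite pmulr_rge0 // subr_ge0 mulrC.
Qed.

End Aux.

Section Main.
Variables (R : realType) (L : nat -> nat) (X : forall n, 'I_(L n) -> R)
  (tau : forall n, 'I_(L n) -> R) (A B : R) (n : nat).
Hypothesis hMZ : MZ_family X tau A B.
Local Notation N := n.*2.+1.
Local Notation xk k := (@X n k).
Local Notation tk k := (@tau n k).

Definition delta : 'I_N -> R[i] := fun j => (j == mid n)%:R.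

Lemma tp_delta y : tp delta y = 1.
Proof.
rewrite tpE (bigD1 (mid n)) //= big1 ?addr0; last first.
  by move=> j /negbTE hj; rewrite /delta hj mul0r.
rewrite /delta eqxx mul1r /E.
by have := freq_eq0 (mid n); rewrite eqxx => /eqP ->; rewrite mul0r ce_0.
Qed.

Lemma sum_delta (F : 'I_N -> R[i]) : \sum_j F j * Num.conj (delta j) = F (mid n).
Proof.
rewrite (bigD1 (mid n)) //= big1 ?addr0 /delta ?eqxx ?rmorph1 ?mulr1 //.
by move=> j /negbTE ->; rewrite rmorph0 mulr0.
Qed.

Lemma tk_gt0 k : 0 < tk k.
Proof. by case: hMZ. Qed.

Lemma qweight_eq (du : 'I_N -> R[i]) (hdu : Sc X tau du = delta) (k : 'I_(L n)) :
  qweight X tau k = (tk k)%:C * Num.conj (tp du (xk k)).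
Proof.
have t0 := tk_gt0 k.
rewrite /qweight /dualframe.
set s := (Num.sqrt (tk k))%:C.
have -> : (fun y => s * kern n (xk k) y) = tp (fun j : 'I_N => s * Num.conj (E j (xk k))).
  apply: funext => y; rewrite kern_tp !tpE big_distrr; apply: eq_bigr => j _ /=; ring.
have [e [-> he]] := frameSinv_tp hMZ (fun j : 'I_N => s * Num.conj (E j (xk k))).
rewrite cint_tp -(sum_delta e) -hdu herm he.
have -> : \sum_j s * Num.conj (E j (xk k)) * Num.conj (du j) = s * Num.conj (tp du (xk k)).
  rewrite tpE rmorph_sum big_distrr; apply: eq_bigr => j _ /=; rewrite rmorphM /=; ring.
by rewrite mulrA /s -rmorphM /= -expr2 sqr_sqrtr // ltW.
Qed.


Lemma exact_tp (du : 'I_N -> R[i]) (hdu : Sc X tau du = delta) (c : 'I_N -> R[i]) :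
  quad X tau n (tp c) = cint (- (1/2)) (1/2) (tp c).
Proof.
rewrite cint_tp /quad; under eq_bigr do rewrite (qweight_eq hdu).
have -> : \sum_k tp c (xk k) * ((tk k)%:C * Num.conj (tp du (xk k))) = Bf X tau c du.
  by rewrite /Bf; apply: eq_bigr => k _; ring.
by rewrite -SB -herm hdu sum_delta.
Qed.

Lemma Q_bound (du : 'I_N -> R[i]) (hdu : Sc X tau du = delta) :
  \sum_k Normc.normc (tp du (xk k)) ^+ 2 * tk k <= A^-1.
Proof.
set Q := \sum_k _.
have Q0 : 0 <= Q.
  by apply: sumr_ge0 => k _; apply: mulr_ge0; [exact: sqr_ge0|exact: ltW (tk_gt0 k)].
have hQ : Q%:C = Num.conj (du (mid n)).
  rewrite -Bf_diag -SB hdu -(sum_delta (fun j => Num.conj (du j))).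
  by apply: eq_bigr => j _; rewrite mulrC /delta rmorph_nat.
have hn : Normc.normc (du (mid n)) = Q.
  by rewrite -normc_conj -hQ normc_real ger0_norm.
case: hMZ => A0 _ _ H; have [hA _] := H n (tp du) (tp_trig du).
rewrite -/Q norm2sq_tp in hA.
have h1 : Q ^+ 2 <= \sum_j Normc.normc (du j) ^+ 2.
  rewrite (bigD1 (mid n)) //= hn lerDl sumr_ge0 // => j _; exact: sqr_ge0.
have h2 : A * Q ^+ 2 <= Q by apply: le_trans hA; rewrite ler_pM2l.
have [->|Qp] := eqVneq Q 0; first by rewrite invr_ge0 ltW.
have Qgt : 0 < Q by rewrite lt0r Qp Q0.
have h3 : A * Q <= 1 by rewrite -(ler_pM2r Qgt) mul1r -mulrA -expr2.
by rewrite -(ler_pM2l A0) mulrV ?unitfE ?gt_eqF.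
Qed.

Lemma part2a (du : 'I_N -> R[i]) (hdu : Sc X tau du = delta) (f : R -> R[i]) :
  Normc.normc (quad X tau n f) ^+ 2 <=
    A^-1 * \sum_k Normc.normc (f (xk k)) ^+ 2 * tk k.
Proof.
have A0 : 0 < A by case: hMZ.
rewrite /quad; under eq_bigr do rewrite (qweight_eq hdu).
set a := fun k => Normc.normc (f (xk k)) * Num.sqrt (tk k).
set b := fun k => Num.sqrt (tk k) * Normc.normc (tp du (xk k)).
have st : forall k, Num.sqrt (tk k) * Num.sqrt (tk k) = tk k.
  by move=> k; rewrite -expr2 sqr_sqrtr // ltW // tk_gt0.
have h1 : Normc.normc (\sum_k f (xk k) * ((tk k)%:C * Num.conj (tp du (xk k))))
    <= \sum_k a k * b k.
  apply: le_trans (normc_sum _ _) _; apply: ler_sum => k _.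
  rewrite !Normc.normcM normc_conj normc_real (ger0_norm (ltW (tk_gt0 k))).
  have -> : a k * b k = Normc.normc (f (xk k)) * (Num.sqrt (tk k) * Num.sqrt (tk k))
     * Normc.normc (tp du (xk k)) by rewrite /a /b; ring.
  by rewrite st mulrA.
have h2 := CS a b.
have ea : \sum_k a k ^+ 2 = \sum_k Normc.normc (f (xk k)) ^+ 2 * tk k.
  by apply: eq_bigr => k _; rewrite /a exprMn sqr_sqrtr // ltW // tk_gt0.
have eb : \sum_k b k ^+ 2 = \sum_k Normc.normc (tp du (xk k)) ^+ 2 * tk k.
  by apply: eq_bigr => k _; rewrite /b exprMn sqr_sqrtr ?ltW ?tk_gt0 // mulrC.
rewrite ea eb in h2.
have F0 : 0 <= \sum_k Normc.normc (f (xk k)) ^+ 2 * tk k.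
  by apply: sumr_ge0 => k _; apply: mulr_ge0; [exact: sqr_ge0|exact: ltW (tk_gt0 k)].
apply: (@le_trans _ _ ((\sum_k a k * b k) ^+ 2)).
  by rewrite !expr2; apply: ler_pM => //; exact: normc_ge0.
apply: le_trans h2 _; rewrite mulrC; apply: ler_wpM2r => //; exact: Q_bound.
Qed.

Lemma sumt_le_B : \sum_k tk k <= B.
Proof.
case: hMZ => _ _ _ H; have [_ hB] := H n (tp delta) (tp_trig delta).
have hd : \sum_j Normc.normc (delta j) ^+ 2 = 1.
  rewrite (bigD1 (mid n)) //= big1 ?addr0 /delta ?eqxx ?Normc.normc1 ?expr1n //.
  by move=> j /negbTE ->; rewrite Normc.normc0 expr0n.
rewrite norm2sq_tp hd mulr1 in hB.
apply: le_trans hB; apply: ler_sum => k _; by rewrite tp_delta Normc.normc1 expr1n mul1r.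
Qed.

End Main.

Section Bound.
Variable R : realType.

Lemma periodic_int (f : R -> R[i]) : (forall x, f (x + 1) = f x) ->
  forall (m : int) x, f (x + m%:~R) = f x.
Proof.
move=> hf.
have hn : forall (k : nat) x, f (x + k%:R) = f x.
  elim=> [|k IH] x; first by rewrite addr0.
  by rewrite -natr1 addrA hf IH.
case=> k x; first exact: hn.
rewrite NegzE rmorphN /=.
have h := hn k.+1 (x - (k.+1)%:R); rewrite subrK in h.
by rewrite h.
Qed.

Lemma normc_eta (z : R[i]) :
  Normc.normc z = Num.sqrt (complex.Re z ^+ 2 + complex.Im z ^+ 2).
Proof. by case: z. Qed.

Lemma sobolev_bounded (s : R) (f : R -> R[i]) : sobolev s f ->
  exists M, forall x, Normc.normc (f x) <= M.
Proof.
case=> hp cRe cIm _.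
set phi := fun x => complex.Re (f x) ^+ 2 + complex.Im (f x) ^+ 2.
have cphi : continuous phi.
  have -> : phi = (fun x => complex.Re (f x)) \* (fun x => complex.Re (f x)) +
      (fun x => complex.Im (f x)) \* (fun x => complex.Im (f x)).
    by apply: funext => x; rewrite /phi !expr2.
  move=> x; apply: continuousD; apply: continuousM; [exact: cRe|exact: cRe|exact: cIm|exact: cIm].
have [c _ hc] := EVT_max (@ler01 R) (continuous_subspaceT cphi).
exists (Num.sqrt (phi c)) => x.
set y := x - (Num.floor x)%:~R.
have hy : f x = f y by rewrite -(periodic_int hp (Num.floor x) y) /y subrK.
have y01 : y \in `[0, 1].
  rewrite in_itv /= /y subr_ge0 Num.Theory.floor_le /= lerBlDl.
  by have := Num.Theory.floorD1_gt x; rewrite intrD /= addrC => /ltW.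
rewrite hy normc_eta; apply: ler_wsqrtr; exact: hc.
Qed.

End Bound.

Theorem lemma2p6 (R : realType) (L : nat -> nat)
    (X : forall n, 'I_(L n) -> R) (tau : forall n, 'I_(L n) -> R) (A B : R) :
  MZ_family X tau A B ->
  (forall (n : nat) (p : R -> R[i]), trig_poly n p ->
     quad X tau n p = cint (- (1/2)) (1/2) p) /\
  (forall (s : R) (f : R -> R[i]), 1/2 < s -> sobolev s f ->
     forall n : nat,
       Normc.normc (quad X tau n f) ^+ 2
         <= A^-1 * \sum_(k < L n) Normc.normc (f (X n k)) ^+ 2 * tau n k
     /\ A^-1 * \sum_(k < L n) Normc.normc (f (X n k)) ^+ 2 * tau n k
         <= B / A * supnorm f ^+ 2).
Proof.
move=> hMZ; split.
  move=> n p /trig_tp [c ->].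
  have [du hdu] := Sc_surj hMZ (@delta R n).
  by have := exact_tp hMZ hdu c.
move=> s f _ hs n.
have [du hdu] := Sc_surj hMZ (@delta R n).
split; first by have := part2a hMZ hdu f.
have [A0 B0 t0 _] := hMZ.
rewrite (mulrC B) -mulrA; apply: ler_wpM2l; first by rewrite invr_ge0 ltW.
have [M hM] := sobolev_bounded hs.
have hsup : forall x, Normc.normc (f x) <= supnorm f.
  move=> x; apply: ub_le_sup; last by exists x.
  by exists M => _ [y _ <-]; exact: hM.
apply: (@le_trans _ _ (\sum_(k < L n) supnorm f ^+ 2 * tau n k)).
  apply: ler_sum => k _; apply: ler_wpM2r; first exact: ltW.
  by rewrite !expr2; apply: ler_pM => //; exact: normc_ge0.
rewrite -mulr_sumr mulrC; apply: ler_wpM2r; first exact: sqr_ge0.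
by have := sumt_le_B n hMZ.
Qed.
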